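(* For two finite subsets $D_1, D_2 \subset \mathbb{N}$, \[ \alpha(D_1 \cup D_2) \geq \alpha(D_1)\,\alpha(D_2). \]
   Context: For a finite $D \subset \mathbb{N} = \{1,2,\ldots\}$ and $n \geq 1$, the circulant graph $G_n$ with set of distances $D$ has vertex set $\{0, \ldots, n-1\}$, vertices $u, v$ (possibly equal) being adjacent iff $u - v \equiv d$ or $v - u \equiv d \pmod n$ for some $d \in D$. $\alpha(G)$ is the maximum size of an independent set (no two adjacent vertices, no looped vertex), and $\alpha(D) := \lim_{n\to\infty} \alpha(G_n)/n$ (which exists). *)

(* Defs.v *)
From mathcomp Require Import all_boot all_order all_algebra.
From mathcomp Require Import all_classical all_reals all_analysis.
Set Implicit Arguments. Unset Strict Implicit. Unset Printing Implicit Defensive.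
Import Order.TTheory GRing.Theory Num.Theory.

(* A finite set of distances D ⊂ ℕ = {1,2,...} is represented by a list of
   positive naturals (duplicates/order irrelevant); union = concatenation. *)
Definition distances (D : seq nat) : bool := all (fun d => 0 < d) D.

Definition circ_adj (D : seq nat) (n : nat) (u v : 'I_n) : bool :=
  has (fun d => (v + d == u %[mod n]) || (u + d == v %[mod n])) D.

Definition circ_indep (D : seq nat) (n : nat) (S : {set 'I_n}) : bool :=
  [forall u in S, forall v in S, ~~ circ_adj D u v].

Definition circ_alpha (D : seq nat) (n : nat) : nat :=
  \max_(S : {set 'I_n} | circ_indep D S) #|S|.

(* The sequence n ↦ α(G_n)/n, whose limit is α(D). *)
Definition alpha_ratio (R : realType) (D : seq nat) (n : nat) : R :=
  ((circ_alpha D n)%:R / n%:R)%R.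

(* Main.v *)
Require Import Defs.
From mathcomp Require Import all_boot all_order all_algebra.
From mathcomp Require Import all_classical all_reals all_analysis.
Import Order.TTheory GRing.Theory Num.Theory numFieldNormedType.Exports.

Lemma alpha_attained D n : exists2 S : {set 'I_n}, circ_indep D S & circ_alpha D n = #|S|.
Proof.
have h0 : (0 < #|[pred S : {set 'I_n} | circ_indep D S]|)%N.
  apply/card_gt0P; exists (finset.set0 : {set 'I_n}); rewrite inE /circ_indep.
  by apply/forallP => u; rewrite finset.in_set0.
have [S HS HE] := eq_bigmax_cond (fun S : {set 'I_n} => #|S|) h0.
by exists S => //; rewrite /circ_alpha.
Qed.


Lemma red (k N u v d : nat) : k %| N -> (v + d == u %[mod N]) ->
  (v %% k + d == u %% k %[mod k]).
Proof.
move=> kN /eqP H; apply/eqP.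
by rewrite modnDml modn_mod -(modn_dvdm _ kN) H (modn_dvdm _ kN).
Qed.

Lemma key D1 D2 n m : coprime n.+1 m.+1 ->
  (circ_alpha D1 n.+1 * circ_alpha D2 m.+1 <= circ_alpha (D1 ++ D2) (n.+1 * m.+1))%N.
Proof.
move=> co.
have [S1 I1 ->] := alpha_attained D1 n.+1.
have [S2 I2 ->] := alpha_attained D2 m.+1.
pose N := (n.+1 * m.+1)%N.
pose f := fun x : 'I_N => ((inord (x %% n.+1) : 'I_n.+1), (inord (x %% m.+1) : 'I_m.+1)).
have vn : forall x : nat, val (inord (x %% n.+1) : 'I_n.+1) = x %% n.+1.
  by move=> x; apply: inordK; have := ltn_mod x n.+1; have := ltn_mod x m.+1; by [].
have vm : forall x : nat, val (inord (x %% m.+1) : 'I_m.+1) = x %% m.+1.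
  by move=> x; apply: inordK; have := ltn_mod x n.+1; have := ltn_mod x m.+1; by [].
have finj : injective f.
  move=> x y [] /(congr1 val); rewrite !vn => hn /(congr1 val); rewrite !vm => hm.
  apply: val_inj => /=.
  have := chinese_remainder co x y; rewrite hn hm !eqxx /= => /eqP.
  by rewrite !modn_small.
have cR : (#|{: 'I_n.+1 * 'I_m.+1}| <= #|{: 'I_N}|)%N by rewrite card_prod !card_ord.
have [g fg gf] := inj_card_bij finj cR.
pose S := g @: finset.setX S1 S2.
have cS : #|S| = (#|S1| * #|S2|)%N.
  by rewrite card_imset ?cardsX //; apply: can_inj gf.
rewrite -cS; apply: (@leq_bigmax_cond _ (fun S => circ_indep (D1 ++ D2) S) (fun S => #|S|) S).
apply/forallP => u; apply/implyP => uS; apply/forallP => v; apply/implyP => vS.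
case/imsetP: uS => p pS ->; case/imsetP: vS => q qS ->.
have fu : f (g p) = p by rewrite gf.
have fv : f (g q) = q by rewrite gf.
move: pS qS; rewrite -fu -fv; move: (g p) (g q) => x y.
rewrite !inE /= => /andP [p1S p2S] /andP [q1S q2S].
rewrite !fg /circ_adj has_cat negb_or; apply/andP; split.
- move/forallP: I1 => /(_ _) /implyP /(_ p1S) /forallP /(_ _) /implyP /(_ q1S).
  apply: contra; apply: sub_has => d /=.
  rewrite !vn.
  by case/orP => H; apply/orP; [left|right]; apply: red H; apply: dvdn_mulr.
- move/forallP: I2 => /(_ _) /implyP /(_ p2S) /forallP /(_ _) /implyP /(_ q2S).
  apply: contra; apply: sub_has => d /=.
  rewrite !vm.
  by case/orP => H; apply/orP; [left|right]; apply: red H; apply: dvdn_mull.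
Qed.

Local Open Scope classical_set_scope.
Local Open Scope ring_scope.

Lemma cvg_sub : (fun k : nat => (k.+1 * k.+2)%N) @ \oo --> \oo.
Proof.
move=> P [n _ Pn]; exists n => // m /= le; apply: Pn => /=.
by apply: (leq_trans le); rewrite (leq_trans (leqnSn m)) // leq_pmulr.
Qed.

Theorem proposition5 (R : realType) (D1 D2 : seq nat) (a1 a2 a12 : R) :
  distances D1 -> distances D2 ->
  alpha_ratio R D1 @ \oo --> a1 ->
  alpha_ratio R D2 @ \oo --> a2 ->
  alpha_ratio R (D1 ++ D2) @ \oo --> a12 ->
  a1 * a2 <= a12.
Proof.
move=> _ _ c1 c2 c12.
have h1 : (fun k => alpha_ratio R D1 k.+1) @ \oo --> a1.
  by rewrite (cvg_shiftS (fun k => alpha_ratio R D1 k)).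
have h2 : (fun k => alpha_ratio R D2 k.+2) @ \oo --> a2.
  rewrite (cvg_shiftS (fun k => alpha_ratio R D2 k.+1)).
  by rewrite (cvg_shiftS (fun k => alpha_ratio R D2 k)).
have h12 : (fun k => alpha_ratio R (D1 ++ D2) (k.+1 * k.+2)%N) @ \oo --> a12.
  exact: (cvg_comp _ _ cvg_sub c12).
apply: (ler_cvg_to (cvgM h1 h2) h12).
near=> k => /=.
rewrite /alpha_ratio mulf_div -!natrM.
apply: ler_pM => //.
by rewrite ler_nat; apply: key; apply: coprimenS.
Unshelve. all: by end_near.
Qed.
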